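(* Let $(M,d)$ be a complete geodesic space with $\mathrm{curv}(M)\le 0$ and finite diameter $\mathrm{diam}(M)>0$. Then for every $p\in M$, the function $x\mapsto d^2(p,x)$ is geodesically $\beta$-expconcave for all $0<\beta\le 1/(2\,\mathrm{diam}(M)^2)$.
   Context: A geodesic is a path $\gamma:[0,1]\to M$ with $d(\gamma(s),\gamma(t))=|t-s|\,d(\gamma(0),\gamma(1))$; a geodesic space is one where any two points are joined by a geodesic. $\mathrm{curv}(M)\le 0$ means: for all $p,x,y\in M$, every geodesic $\gamma:[0,1]\to M$ from $x$ to $y$ and every $t\in[0,1]$, $d^2(p,\gamma(t))\le (1-t)d^2(p,x)+t\,d^2(p,y)-t(1-t)d^2(x,y)$. A function $f:M\to\mathbb R$ is geodesically concave if for every geodesic $\gamma$, $t\mapsto f(\gamma(t))$ is concave on $[0,1]$; for $\beta>0$, $f$ is geodesically $\beta$-expconcave if $\exp(-\beta f)$ is geodesically concave. *)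

(* Defs.v *)
From Stdlib Require Import Reals.
Open Scope R_scope.

Definition is_metric {M : Type} (d : M -> M -> R) : Prop :=
  (forall x y, 0 <= d x y) /\
  (forall x y, d x y = 0 <-> x = y) /\
  (forall x y, d x y = d y x) /\
  (forall x y z, d x z <= d x y + d y z).

Definition is_complete {M : Type} (d : M -> M -> R) : Prop :=
  forall u : nat -> M,
    (forall eps, 0 < eps -> exists N, forall m n, (N <= m)%nat -> (N <= n)%nat ->
        d (u m) (u n) < eps) ->
    exists l : M, forall eps, 0 < eps -> exists N, forall n, (N <= n)%nat ->
        d (u n) l < eps.

(* A geodesic: a path gamma : [0,1] -> M (represented by a function on R whose
   values outside [0,1] are irrelevant) with
   d(gamma s, gamma t) = |t - s| d(gamma 0, gamma 1) for s,t in [0,1]. *)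
Definition is_geodesic {M : Type} (d : M -> M -> R) (gamma : R -> M) : Prop :=
  forall s t, 0 <= s <= 1 -> 0 <= t <= 1 ->
    d (gamma s) (gamma t) = Rabs (t - s) * d (gamma 0) (gamma 1).

Definition is_geodesic_space {M : Type} (d : M -> M -> R) : Prop :=
  forall x y : M, exists gamma : R -> M,
    is_geodesic d gamma /\ gamma 0 = x /\ gamma 1 = y.

Definition curv_le0 {M : Type} (d : M -> M -> R) : Prop :=
  forall (p x y : M) (gamma : R -> M),
    is_geodesic d gamma -> gamma 0 = x -> gamma 1 = y ->
    forall t, 0 <= t <= 1 ->
      (d p (gamma t))^2 <= (1 - t) * (d p x)^2 + t * (d p y)^2
                           - t * (1 - t) * (d x y)^2.

Definition is_diameter {M : Type} (d : M -> M -> R) (D : R) : Prop :=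
  is_lub (fun r => exists x y : M, r = d x y) D.

Definition concave_on_01 (g : R -> R) : Prop :=
  forall s t l, 0 <= s <= 1 -> 0 <= t <= 1 -> 0 <= l <= 1 ->
    (1 - l) * g s + l * g t <= g ((1 - l) * s + l * t).

Definition geod_concave {M : Type} (d : M -> M -> R) (f : M -> R) : Prop :=
  forall gamma : R -> M, is_geodesic d gamma -> concave_on_01 (fun t => f (gamma t)).

Definition geod_expconcave {M : Type} (d : M -> M -> R) (beta : R) (f : M -> R) : Prop :=
  geod_concave d (fun x => exp (- beta * f x)).

(* Main.v *)
Require Import Defs.
From Stdlib Require Import Reals Lra Psatz.
From Coquelicot Require Import Coquelicot.
Open Scope R_scope.

Section K.
Variables (a b c be K : R).
Definition qq t := c*t^2 + (b-a-c)*t + a.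
Definition EE t := exp (- be * qq t).
Definition ph t := EE t - (1-t)*EE 0 - t*EE 1.
Definition dph t := - be*(2*c*t+(b-a-c))*EE t + EE 0 - EE 1.
Definition ddph t := (be^2*(2*c*t+(b-a-c))^2 - 2*be*c)*EE t.

Lemma ph_der t : derivable_pt_lim ph t (dph t).
Proof. apply is_derive_Reals. unfold ph, dph, EE, qq. auto_derive; auto. simpl; ring. Qed.
Lemma dph_der t : derivable_pt_lim dph t (ddph t).
Proof. apply is_derive_Reals. unfold ddph, dph, EE, qq. auto_derive; auto. simpl; ring. Qed.

Hypotheses (hc : 0 <= c) (hbe : 0 < be) (ha : a <= K) (hb : b <= K)
  (hK : 2*be*K <= 1) (hdisc : (b-a-c)^2 <= 4*a*c).

Lemma ddph_nonpos t : 0 <= t <= 1 -> ddph t <= 0.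
Proof.
  intros Ht. unfold ddph.
  assert (Hq : qq t <= K).
  { unfold qq. assert (0 <= t*(1-t)*c) by (apply Rmult_le_pos; nra).
    nra. }
  assert (H1 : (2*c*t+(b-a-c))^2 <= 4*c*qq t) by (unfold qq; nra).
  assert (H2 : be*(2*c*t+(b-a-c))^2 <= 2*c).
  { apply Rle_trans with (be*(4*c*qq t)). apply Rmult_le_compat_l; lra.
    assert (be*qq t <= be*K) by (apply Rmult_le_compat_l; lra). nra. }
  assert (0 < EE t) by apply exp_pos.
  assert (be^2*(2*c*t+(b-a-c))^2 - 2*be*c <= 0) by nra.
  nra.
Qed.

Lemma key l : 0 <= l <= 1 -> (1-l)*EE 0 + l*EE 1 <= EE l.
Proof.
  intros Hl.
  destruct (Rle_or_lt 0 (ph l)) as [H|H]. { unfold ph in H; lra. }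
  exfalso.
  assert (Hl0 : 0 < l). { destruct (Req_dec l 0) as [->|]; [unfold ph in H; simpl in H; lra|lra]. }
  assert (Hl1 : l < 1). { destruct (Req_dec l 1) as [->|]; [unfold ph in H; lra|lra]. }
  destruct (MVT_cor2 ph dph 0 l Hl0 (fun c _ => ph_der c)) as [x1 [E1 Hx1]].
  destruct (MVT_cor2 ph dph l 1 Hl1 (fun c _ => ph_der c)) as [x2 [E2 Hx2]].
  assert (P0 : ph 0 = 0) by (unfold ph; ring).
  assert (P1 : ph 1 = 0) by (unfold ph; ring).
  rewrite P0 in E1. rewrite P1 in E2.
  assert (dph x1 < 0) by nra.
  assert (dph x2 > 0) by nra.
  assert (Hx : x1 < x2) by lra.
  destruct (MVT_cor2 dph ddph x1 x2 Hx (fun c _ => dph_der c)) as [y [E3 Hy]].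
  assert (ddph y <= 0) by (apply ddph_nonpos; lra).
  nra.
Qed.
End K.

Theorem mainTheorem2 (M : Type) (d : M -> M -> R) (D : R) :
  is_metric d -> is_complete d -> is_geodesic_space d -> curv_le0 d ->
  is_diameter d D -> 0 < D ->
  forall (p : M) (beta : R), 0 < beta -> beta <= 1 / (2 * D ^ 2) ->
    geod_expconcave d beta (fun x => (d p x) ^ 2).
Proof.
  intros [Hpos [Hsep [Hsym Htri]]] _ _ Hcurv [Hub _] HD p beta Hbe Hbeta.
  intros gamma Hg s t l Hs Ht Hl. simpl.
  set (sigma := fun u => gamma ((1-u)*s + u*t)).
  assert (Hsig : is_geodesic d sigma).
  { intros u v Hu Hv. unfold sigma.
    replace ((1-0)*s+0*t) with s by ring. replace ((1-1)*s+1*t) with t by ring.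
    rewrite (Hg ((1-u)*s+u*t)) by nra. rewrite (Hg s t) by lra.
    replace ((1 - v) * s + v * t - ((1 - u) * s + u * t)) with ((v-u)*(t-s)) by ring.
    rewrite Rabs_mult. ring. }
  assert (C := Hcurv p (gamma s) (gamma t) sigma Hsig).
  unfold sigma in C.
  replace ((1-0)*s+0*t) with s in C by ring.
  replace ((1-1)*s+1*t) with t in C by ring.
  specialize (C eq_refl eq_refl l Hl).
  set (ra := d p (gamma s)) in *. set (rb := d p (gamma t)) in *.
  set (rc := d (gamma s) (gamma t)) in *.
  set (m := (1-l)*s + l*t) in *.
  assert (Hra : 0 <= ra) by apply Hpos. assert (Hrb : 0 <= rb) by apply Hpos.
  assert (Hrc : 0 <= rc) by apply Hpos.
  assert (T1 : rb <= ra + rc) by (unfold ra, rb, rc; apply Htri).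
  assert (T2 : ra <= rb + rc).
  { unfold ra, rb, rc. rewrite (Hsym (gamma s) (gamma t)). apply Htri. }
  assert (T3 : rc <= ra + rb).
  { unfold ra, rb, rc. rewrite (Hsym p (gamma s)). apply Htri. }
  assert (Ba : ra <= D) by (apply Hub; exists p, (gamma s); reflexivity).
  assert (Bb : rb <= D) by (apply Hub; exists p, (gamma t); reflexivity).
  assert (HK : 2*beta*D^2 <= 1).
  { apply Rmult_le_compat_r with (r := 2*D^2) in Hbeta; [|nra].
    replace (1 / (2 * D ^ 2) * (2 * D ^ 2)) with 1 in Hbeta by (field; lra). nra. }
  assert (Hdisc : (rb^2 - ra^2 - rc^2)^2 <= 4*ra^2*rc^2).
  { assert (0 <= (rb-ra+rc)*(rb+ra-rc)*(ra+rc-rb)*(ra+rc+rb)).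
    { repeat apply Rmult_le_pos; lra. }
    nra. }
  pose proof (key (ra^2) (rb^2) (rc^2) beta (D^2) ltac:(nra) Hbe
     ltac:(nra) ltac:(nra) HK Hdisc l Hl) as Kl.
  unfold EE, qq in Kl.
  replace (rc ^ 2 * 0 ^ 2 + (rb ^ 2 - ra ^ 2 - rc ^ 2) * 0 + ra ^ 2) with (ra^2) in Kl by ring.
  replace (rc ^ 2 * 1 ^ 2 + (rb ^ 2 - ra ^ 2 - rc ^ 2) * 1 + ra ^ 2) with (rb^2) in Kl by ring.
  eapply Rle_trans; [exact Kl|].
  assert (EL : forall x y, x <= y -> exp x <= exp y).
  { intros x y [Hxy|Hxy]; [left; apply exp_increasing; exact Hxy|right; rewrite Hxy; reflexivity]. }
  apply EL.
  assert (beta * d p (gamma m) ^ 2 <= beta * ((1 - l) * ra ^ 2 + l * rb ^ 2 - l * (1 - l) * rc ^ 2))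
    by (apply Rmult_le_compat_l; lra).
  nra.
Qed.
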